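(* Let $K$ be a simplicial complex on $[m]$ which has a minimal Taylor resolution, and let $\Bbbk$ be a commutative ring. If $\Bbbk[K]$ is Golod, then any two distinct minimal non-faces of $K$ are not disjoint.
   Context: A minimal non-face of $K$ is a non-empty $N\subset[m]$ with $N\notin K$ and $N-\{i\}\in K$ for all $i\in N$. $\Bbbk[K]=\Bbbk[v_1,\ldots,v_m]/(v_I\mid I\notin K)$, $|v_i|=2$; it is Golod if all products and (higher) Massey products in the positive-degree part of $\mathrm{Tor}_{\Bbbk[v_1,\ldots,v_m]}(\Bbbk[K],\Bbbk)$ (induced from the Koszul resolution) are trivial. With $N_1,\ldots,N_r$ the minimal non-faces, $K$ has a minimal Taylor resolution if the Taylor resolution of $\Bbbk[K]$ (free on $w_{i_1,\ldots,i_\ell}$, $d(w_{i_1,\ldots,i_\ell})=\sum_k(-1)^{k+1}v_{(N_{i_1}\cup\cdots\cup N_{i_\ell})-(N_{i_1}\cup\cdots\widehat{N_{i_k}}\cdots\cup N_{i_\ell})}w_{i_1,\ldots,\widehat{i_k},\ldots,i_\ell}$, $v_\emptyset=1$) satisfies $d\otimes\Bbbk=0$; equivalently $N_i\not\subset\bigcup_{k\ne i}N_k$ for all $i$. *)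

(* Defs.v *)
From HB Require Import structures.
From mathcomp Require Import all_boot all_order all_algebra.
From mathcomp Require Import mpoly.

Set Implicit Arguments.
Unset Strict Implicit.
Unset Printing Implicit Defensive.
Import GRing.Theory.
Local Open Scope ring_scope.

(** [K] is a simplicial complex on [m]: a family of subsets of [m] closed
    under taking subsets (ghost vertices allowed). *)
Definition simplicial_complex (m : nat) (K : {set {set 'I_m}}) : Prop :=
  forall (s t : {set 'I_m}), s \in K -> t \subset s -> t \in K.

Definition min_nonface (m : nat) (K : {set {set 'I_m}}) (N : {set 'I_m}) : Prop :=
  [/\ N != set0, N \notin K & forall i, i \in N -> N :\ i \in K].

(** K has a minimal Taylor resolution: the Taylor resolution differential
    tensored with k vanishes.  For a family of minimal non-faces I (indexing
    the generator w_I) and N in I, the coefficient of w_{I - N} in d(w_I) is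
    the monomial v_S with S = (U I) - (U (I - N)); this is 0 after tensoring
    with k iff S is non-empty (v_emptyset = 1).  The w_{I-N} are distinct
    basis elements, so d (x) k = 0 iff all such S are non-empty. *)
Definition minimal_taylor (m : nat) (K : {set {set 'I_m}}) : Prop :=
  forall (I : {set {set 'I_m}}),
    (forall N, N \in I -> min_nonface K N) ->
    forall N, N \in I ->
      (\bigcup_(M in I) M) :\: (\bigcup_(M in I :\ N) M) != set0.

(* The Koszul dga  k[K] (x) Lambda[u_1..u_m],  computing                    *)
(* Tor_{k[v_1..v_m]}(k[K], k) as an algebra.                                *)
(* An element is represented as a function J |-> p_J, meaning               *)
(*   sum_J p_J u_J,  p_J in k[v_1,...,v_m],                                *)
(* where u_J = u_{j1} ... u_{jp} (j1 < ... < jp).  Elements of the Koszul   *)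
(* algebra are the "reduced" ones: every monomial v^a of every p_J has      *)
(* support in K (these monomials form a k-basis of k[K]).                   *)

Section Koszul.
Variables (m : nat) (K : {set {set 'I_m}}) (k : comNzRingType).

Definition KA := {ffun {set 'I_m} -> {mpoly k[m]}}.

Definition msupport (a : 'X_{1..m}) : {set 'I_m} := [set i | a i != 0%N].

(** reduction modulo the Stanley-Reisner ideal (projection onto the basis) *)
Definition SRred (p : {mpoly k[m]}) : {mpoly k[m]} :=
  \sum_(a <- msupp p | msupport a \in K) p@_a *: 'X_[a].

Definition reduced (x : KA) : Prop :=
  forall J a, a \in msupp (x J) -> msupport a \in K.

(** sign of u_J u_J' = sign * u_{J u J'} for disjoint J, J' *)
Definition ext_sign (J J' : {set 'I_m}) : k :=
  (-1) ^+ #|[set p : 'I_m * 'I_m | (p.1 \in J) && (p.2 \in J') && (p.2 < p.1)%N]|.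

Definition Kmul (x y : KA) : KA :=
  [ffun L : {set 'I_m} => \sum_(J : {set 'I_m}) \sum_(J' : {set 'I_m} |
       (J :&: J' == set0) && (J :|: J' == L))
       ext_sign J J' *: SRred (x J * y J')].

(** Koszul differential: d(u_i) = v_i, d(v_i) = 0, Leibniz rule *)
Definition Kd (x : KA) : KA :=
  [ffun L : {set 'I_m} => \sum_(i : 'I_m | i \notin L)
       (-1) ^+ #|[set j in L | (j < i)%N]| *: SRred ('X_i * x (i |: L))].

(** total degree of v^a u_J is 2|a| + |J|; its parity is that of |J|. *)
Definition Khomog (d : nat) (x : KA) : Prop :=
  forall J a, a \in msupp (x J) -> (2 * mdeg a + #|J|)%N = d.

(** bar x = (-1)^(1 + deg x) x, extended componentwise *)
Definition Kbar (x : KA) : KA := [ffun J : {set 'I_m} => (-1) ^+ (#|J|.+1) *: x J].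

Definition Kcycle (x : KA) : Prop := reduced x /\ Kd x = 0.
Definition Kboundary (x : KA) : Prop := exists y, reduced y /\ x = Kd y.

Definition pos_cycle (x : KA) : Prop := Kcycle x /\ exists d, (0 < d)%N /\ Khomog d x.

(** Defining system for the Massey product <[c_0], ..., [c_(n-1)]>
    (indices 0..n-1): elements a i j, 0 <= i <= j <= n-1, (i,j) <> (0,n-1). *)
Definition defining_system (n : nat) (c : nat -> KA) (a : nat -> nat -> KA) : Prop :=
  forall i j, (i <= j < n)%N -> ~ (i = 0%N /\ j = n.-1) ->
    [/\ reduced (a i j),
        (i = j -> Kboundary (a i i - c i)) &
        ((i < j)%N -> Kd (a i j) = \sum_(i <= l < j) Kmul (Kbar (a i l)) (a l.+1 j))].

Definition massey_value (n : nat) (a : nat -> nat -> KA) : KA :=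
  \sum_(0 <= l < n.-1) Kmul (Kbar (a 0%N l)) (a l.+1 n.-1).

End Koszul.

(** k[K] is Golod: all products and higher Massey products of classes in
    the positive-degree part of Tor are trivial, i.e. whenever the Massey
    product <a_1,...,a_n> (n >= 2) is defined it contains 0.  For n = 2
    this says exactly that the product a_1 a_2 is zero. *)
Definition golod (k : comNzRingType) (m : nat) (K : {set {set 'I_m}}) : Prop :=
  forall (n : nat) (c : nat -> KA m k), (2 <= n)%N ->
    (forall i, (i < n)%N -> pos_cycle K (c i)) ->
    (exists a, defining_system K n c a) ->
    exists a, defining_system K n c a /\ Kboundary K (massey_value K n a).

(* Main.v *)
Require Import Defs.
From HB Require Import structures.
From mathcomp Require Import all_boot all_order all_algebra.
From mathcomp Require Import mpoly.

Set Implicit Arguments.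
Unset Strict Implicit.
Unset Printing Implicit Defensive.
Import GRing.Theory.
Local Open Scope ring_scope.

Section S.
Variables (m : nat) (K : {set {set 'I_m}}) (k : comNzRingType).
Hypothesis Ks : simplicial_complex K.
Implicit Types (p q : {mpoly k[m]}).

Lemma SRredE (p : {mpoly k[m]}) b :
  (SRred K p)@_b = if msupport b \in K then p@_b else 0.
Proof.
rewrite /SRred raddf_sum /= big_mkcond /=.
under eq_bigr => a _ do rewrite mcoeffZ mcoeffX.
case: (boolP (b \in msupp p)) => hb.
  rewrite (bigD1_seq b) //= ?msupp_uniq // eqxx mulr1 big1 ?addr0 //.
  by move=> a /negbTE; rewrite eq_sym => ->; rewrite mulr0 if_same.
move: (hb); rewrite -mcoeff_eq0 => /eqP ->; rewrite if_same big_seq big1 // => a ha.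
case: (a =P b) => [ab|_]; last by rewrite mulr0 if_same.
by move: ha hb; rewrite ab => ->.
Qed.


Lemma SRredD p q : SRred K (p + q) = SRred K p + SRred K q.
Proof. apply/mpolyP => b; rewrite !(mcoeffD, SRredE). by case: ifP => _; rewrite ?addr0. Qed.
Lemma SRredZ c p : SRred K (c *: p) = c *: SRred K p.
Proof. apply/mpolyP => b; rewrite !(mcoeffZ, SRredE); by case: ifP => _; rewrite ?mulr0. Qed.
Lemma SRred0 : SRred K (0 : {mpoly k[m]}) = 0.
Proof. by apply/mpolyP => b; rewrite SRredE mcoeff0 if_same. Qed.
Lemma SRredN p : SRred K (- p) = - SRred K p.
Proof. apply/mpolyP => b; rewrite !(mcoeffN, SRredE); by case: ifP => _; rewrite ?oppr0. Qed.
Lemma SRred_sum (I : Type) (r : seq I) (P : pred I) (F : I -> {mpoly k[m]}) :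
  SRred K (\sum_(i <- r | P i) F i) = \sum_(i <- r | P i) SRred K (F i).
Proof.
by elim/big_rec2: _ => [|i x y _ <-]; rewrite ?SRred0 ?SRredD.
Qed.

Lemma msupport_addl (a b : 'X_{1..m}) : msupport a \subset msupport (a + b).
Proof.
apply/subsetP => i; rewrite !inE mnmDE; apply: contra => /eqP.
by move/eqP; rewrite addn_eq0 => /andP[].
Qed.

Lemma SRredMl p q : SRred K (SRred K p * q) = SRred K (p * q).
Proof.
apply/mpolyP => b; rewrite !SRredE; case: ifP => // hb.
rewrite !mcoeffM; apply: eq_bigr => kk /eqP hk; rewrite SRredE.
suff -> : msupport kk.1 \in K by [].
by apply: (Ks hb); move: (msupport_addl kk.1 kk.2); rewrite -hk.
Qed.

Lemma SRredMr p q : SRred K (p * SRred K q) = SRred K (p * q).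
Proof. by rewrite mulrC SRredMl mulrC. Qed.


Lemma disj_union_eq (J J' L : {set 'I_m}) : J \subset L ->
  ((J :&: J' == set0) && (J :|: J' == L)) = (J' == L :\: J).
Proof.
move=> hJL; apply/idP/eqP.
- case/andP => /eqP h1 /eqP h2; apply/setP => x.
  move/setP/(_ x): h1; move/setP/(_ x): h2.
  by rewrite !inE; case: (x \in J); case: (x \in J'); case: (x \in L).
- move=> ->; apply/andP; split; apply/eqP/setP => x; rewrite !inE;
  have := subsetP hJL x; by case: (x \in J); case: (x \in L) => // ->.
Qed.

Implicit Types (x y : KA m k).

Lemma KmulE x y L : Kmul K x y L =
  \sum_(J : {set 'I_m} | J \subset L) ext_sign k J (L :\: J) *: SRred K (x J * y (L :\: J)).
Proof.
rewrite ffunE [RHS]big_mkcond; apply: eq_bigr => J _; case: ifP => hJ.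
  rewrite (big_pred1 (L :\: J)) // => J'; exact: disj_union_eq.
rewrite big1 // => J' /andP[_ /eqP h]; move: hJ; rewrite -h subsetUl //.
Qed.


Definition lts (i : 'I_m) (L : {set 'I_m}) := #|[set j in L | (j < i)%N]|.
Definition gts (i : 'I_m) (L : {set 'I_m}) := #|[set j in L | (i < j)%N]|.
Definition inv (J J' : {set 'I_m}) :=
  #|[set p : 'I_m * 'I_m | (p.1 \in J) && (p.2 \in J') && (p.2 < p.1)%N]|.

Lemma ltsE i L : lts i L = (\sum_(j in L) (j < i)%N)%N.
Proof. by rewrite /lts /gts -sum1_card [RHS]big_mkcond [LHS]big_mkcond; apply: eq_bigr => j _; rewrite inE; by case: (j \in L); case: (j < i)%N. Qed.
Lemma gtsE i L : gts i L = (\sum_(j in L) (i < j)%N)%N.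
Proof. by rewrite /lts /gts -sum1_card [RHS]big_mkcond [LHS]big_mkcond; apply: eq_bigr => j _; rewrite inE; by case: (j \in L); case: (i < j)%N. Qed.
Lemma invE J J' : inv J J' = (\sum_(a in J) lts a J')%N.
Proof.
rewrite /inv -sum1_card.
under [RHS]eq_bigr => a _ do rewrite /lts -sum1_card.
rewrite pair_big_dep /=; apply: eq_bigl => -[a b] /=; by rewrite !inE andbA.
Qed.


Lemma lts_split i (J L : {set 'I_m}) : J \subset L ->
  lts i L = (lts i J + lts i (L :\: J))%N.
Proof. by move=> hJ; rewrite !ltsE (big_setID J) /=; move/setIidPr: hJ => ->. Qed.

Lemma lts_U1 i j (L : {set 'I_m}) : j \notin L -> lts i (j |: L) = ((j < i)%N + lts i L)%N.
Proof. by move=> hj; rewrite !ltsE big_setU1. Qed.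

Lemma lts1 i j : lts i [set j] = (j < i)%N.
Proof. by rewrite ltsE big_set1. Qed.

Lemma inv_U1l i (J D : {set 'I_m}) : i \notin J -> inv (i |: J) D = (lts i D + inv J D)%N.
Proof. by move=> hi; rewrite !invE big_setU1. Qed.

Lemma inv_U1r i (J D : {set 'I_m}) : i \notin D -> inv J (i |: D) = (gts i J + inv J D)%N.
Proof.
move=> hi; rewrite !invE gtsE -big_split /=; apply: eq_bigr => a _.
by rewrite lts_U1.
Qed.

Lemma lts_gts i (J : {set 'I_m}) : i \notin J -> (lts i J + gts i J)%N = #|J|.
Proof.
move=> hi; rewrite ltsE gtsE -big_split -sum1_card /=; apply: eq_bigr => j hj.
have hji : j != i by apply: contraNneq hi => <-.
by case: (ltngtP j i) => // /val_inj ji; rewrite ji eqxx in hji.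
Qed.

Lemma sgn_odd n1 n2 : odd n1 = odd n2 -> (-1) ^+ n1 = (-1) ^+ n2 :> k.
Proof. by move=> h; rewrite -signr_odd h signr_odd. Qed.


Lemma sum_split_sub (V : zmodType) (i : 'I_m) (A : {set 'I_m}) (F : {set 'I_m} -> V) :
  i \notin A ->
  \sum_(J : {set 'I_m} | J \subset i |: A) F J =
  \sum_(J : {set 'I_m} | J \subset A) F J + \sum_(J : {set 'I_m} | J \subset A) F (i |: J).
Proof.
move=> hi; rewrite (bigID (fun J : {set 'I_m} => i \in J)) /= addrC; congr (_ + _).
  apply: eq_bigl => J; apply/andP/idP => [[/subsetP h hJ]|/subsetP h].
    apply/subsetP => x hx; have := h x hx; rewrite !inE.
    by case: eqP => // ?; subst x; rewrite hx in hJ.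
  split; last by apply: contra hi; apply: h.
  by apply/subsetP => x /h hx; rewrite !inE hx orbT.
rewrite (reindex_onto (fun J => i |: J) (fun J => J :\ i)) /=.
  apply: eq_bigl => J; apply/idP/idP.
    case/andP => /andP[/subsetP h _] /eqP hJ; apply/subsetP => x hx.
    have : x \in i |: A by apply: h; rewrite !inE hx orbT.
    rewrite !inE; case: eqP => // ?; subst x.
    by move: hx; rewrite -hJ !inE eqxx.
  move=> /subsetP h; rewrite !inE eqxx andbT; apply/andP; split.
    by apply/subsetP => x; rewrite !inE => /orP[->//|/h ->]; rewrite orbT.
  have hiJ : i \notin J by apply: contra hi; apply: h.
  by apply/eqP; rewrite setU1K.
by move=> J /andP[_ hJ]; rewrite setD1K.
Qed.

Definition Kpar x : KA m k := [ffun J : {set 'I_m} => (-1) ^+ #|J| *: x J].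

Lemma KdE x L : Kd K x L =
  \sum_(i | i \notin L) (-1) ^+ lts i L *: SRred K ('X_i * x (i |: L)).
Proof. by rewrite ffunE. Qed.


Lemma SL1 (i : 'I_m) (J L : {set 'I_m}) : i \notin J -> (i |: L) :\: J = i |: (L :\: J).
Proof.
move=> hi; apply/setP => z; rewrite !inE; case: (z =P i) => [->|_] //.
by rewrite (negbTE hi).
Qed.
Lemma SL2 (i : 'I_m) (J L : {set 'I_m}) : i \notin L -> (i |: L) :\: (i |: J) = L :\: J.
Proof.
move=> hi; apply/setP => z; rewrite !inE; case: (z =P i) => [->|_] //.
by rewrite (negbTE hi) andbF.
Qed.
Lemma SL3 (i : 'I_m) (J L : {set 'I_m}) : i \in L -> i \notin J -> i |: (L :\: (i |: J)) = L :\: J.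
Proof.
move=> hL hJ; apply/setP => z; rewrite !inE; case: (z =P i) => [->|_] //.
by rewrite hL (negbTE hJ).
Qed.

Lemma SRred_scal2 (c d : k) (a b : {mpoly k[m]}) :
  SRred K ((c *: a) * (d *: SRred K b)) = (c * d) *: SRred K (a * b).
Proof. by rewrite -scalerAl -scalerAr !SRredZ SRredMr scalerA. Qed.

Ltac oddcase := rewrite ?oddD /= ?oddD /=;
  repeat match goal with |- context [odd ?t] => case: (odd t) end; by [].

Lemma sum_split_sub' (V : zmodType) (i : 'I_m) (L : {set 'I_m}) (F : {set 'I_m} -> V) :
  i \in L ->
  \sum_(J : {set 'I_m} | J \subset L) F J =
  \sum_(J : {set 'I_m} | J \subset L :\ i) F J + \sum_(J : {set 'I_m} | J \subset L :\ i) F (i |: J).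
Proof. by move=> hi; rewrite -{1}(setD1K hi) sum_split_sub // setD11. Qed.

Section Leib.
Variables (x y : KA m k) (L : {set 'I_m}).
Let P i A B := SRred K ('X_i * (x A * y B)).
Let s i A : k := (-1) ^+ lts i A.
Let e A B : k := (-1) ^+ inv A B.

Lemma LHS_eq : Kd K (Kmul K x y) L = \sum_(i | i \notin L)
  (\sum_(J : {set 'I_m} | J \subset L) (s i L * e J (i |: (L :\: J))) *: P i J (i |: (L :\: J)) +
   \sum_(J : {set 'I_m} | J \subset L) (s i L * e (i |: J) (L :\: J)) *: P i (i |: J) (L :\: J)).
Proof.
rewrite KdE; apply: eq_bigr => i hi.
rewrite KmulE mulr_sumr SRred_sum scaler_sumr sum_split_sub //; congr (_ + _);
  apply: eq_bigr => J hJ; rewrite -scalerAr SRredZ SRredMr scalerA.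
  have hiJ : i \notin J by apply: contra hi; apply: (subsetP hJ).
  by rewrite SL1.
by rewrite SL2.
Qed.

Lemma RHS1_eq : Kmul K (Kd K x) y L = \sum_(J : {set 'I_m} | J \subset L)
  \sum_(i | i \notin J) (e J (L :\: J) * s i J) *: P i (i |: J) (L :\: J).
Proof.
rewrite KmulE; apply: eq_bigr => J hJ; rewrite KdE mulr_suml SRred_sum scaler_sumr.
by apply: eq_bigr => i hi; rewrite -scalerAl SRredZ SRredMl scalerA -mulrA.
Qed.

Lemma RHS2_eq : Kmul K (Kpar x) (Kd K y) L = \sum_(J : {set 'I_m} | J \subset L)
  \sum_(i | i \notin L :\: J) (e J (L :\: J) * (-1) ^+ #|J| * s i (L :\: J)) *:
     P i J (i |: (L :\: J)).
Proof.
rewrite KmulE; apply: eq_bigr => J hJ; rewrite ffunE KdE mulr_sumr SRred_sum scaler_sumr.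
apply: eq_bigr => i hi; rewrite SRred_scal2 scalerA mulrA /P mulrCA.
by [].
Qed.


Lemma match1 : \sum_(i | i \notin L) \sum_(J : {set 'I_m} | J \subset L)
     (s i L * e J (i |: (L :\: J))) *: P i J (i |: (L :\: J)) =
  \sum_(J : {set 'I_m} | J \subset L) \sum_(i | i \notin L)
     (e J (L :\: J) * (-1) ^+ #|J| * s i (L :\: J)) *: P i J (i |: (L :\: J)).
Proof.
rewrite exchange_big; apply: eq_bigr => J hJ; apply: eq_bigr => i hi; congr (_ *: _).
have hiJ : i \notin J by apply: contra hi; apply: (subsetP hJ).
have hiD : i \notin L :\: J by rewrite inE (negbTE hi) andbF.
rewrite /s /e -!exprD; apply: sgn_odd.
rewrite (lts_split i hJ) inv_U1r // -(lts_gts hiJ); oddcase.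
Qed.

Lemma match2 : \sum_(i | i \notin L) \sum_(J : {set 'I_m} | J \subset L)
     (s i L * e (i |: J) (L :\: J)) *: P i (i |: J) (L :\: J) =
  \sum_(J : {set 'I_m} | J \subset L) \sum_(i | i \notin L)
     (e J (L :\: J) * s i J) *: P i (i |: J) (L :\: J).
Proof.
rewrite exchange_big; apply: eq_bigr => J hJ; apply: eq_bigr => i hi; congr (_ *: _).
have hiJ : i \notin J by apply: contra hi; apply: (subsetP hJ).
rewrite /s /e -!exprD; apply: sgn_odd.
rewrite (lts_split i hJ) inv_U1l //; oddcase.
Qed.

Lemma cross :
  \sum_(J : {set 'I_m} | J \subset L) \sum_(i | (i \notin J) && (i \in L))
     (e J (L :\: J) * s i J) *: P i (i |: J) (L :\: J) +
  \sum_(J : {set 'I_m} | J \subset L) \sum_(i | (i \notin L :\: J) && (i \in L))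
     (e J (L :\: J) * (-1) ^+ #|J| * s i (L :\: J)) *: P i J (i |: (L :\: J)) = 0.
Proof.
rewrite (exchange_big_dep (fun i => i \in L)); last by move=> J i _ /andP[].
rewrite [X in _ + X](exchange_big_dep (fun i => i \in L)); last by move=> J i _ /andP[].
rewrite -big_split big1 //= => i hiL.
rewrite (eq_bigl (fun J : {set 'I_m} => J \subset L :\ i)); last first.
  by move=> J; rewrite subsetD1 hiL andbT.
rewrite [X in _ + X](eq_bigl (fun J : {set 'I_m} => (J \subset L) && (i \in J))); last first.
  by move=> J; rewrite !inE hiL !andbT negbK.
rewrite big_mkcondr [X in _ + X](sum_split_sub' _ hiL).
rewrite [X in _ + (X + _)]big1 ?add0r; last first.
  by move=> J; rewrite subsetD1 => /andP[_ /negbTE ->].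
rewrite -big_split big1 //= => J; rewrite subsetD1 => /andP[hJ hiJ].
rewrite setU11 SL3 // -scalerDl.
rewrite -[in e J _](SL3 hiL hiJ).
set D' := L :\: (i |: J).
have hiD : i \notin D' by rewrite !inE eqxx.
suff -> : e J (i |: D') * s i J + e (i |: J) D' * (-1) ^+ #|i |: J| * s i D' = 0 by rewrite scale0r.
apply/eqP; rewrite addr_eq0; apply/eqP.
rewrite /s /e -!exprD -[RHS]mulN1r -exprS; apply: sgn_odd.
rewrite inv_U1r // inv_U1l // cardsU1 hiJ -(lts_gts hiJ) /=; oddcase.
Qed.


Lemma Kleibniz_pt :
  Kd K (Kmul K x y) L = Kmul K (Kd K x) y L + Kmul K (Kpar x) (Kd K y) L.
Proof.
rewrite LHS_eq RHS1_eq RHS2_eq big_split /= match1 match2.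
have h1 : \sum_(J : {set 'I_m} | J \subset L)
  \sum_(i | i \notin J) (e J (L :\: J) * s i J) *: P i (i |: J) (L :\: J) =
  \sum_(J : {set 'I_m} | J \subset L) \sum_(i | (i \notin J) && (i \in L))
     (e J (L :\: J) * s i J) *: P i (i |: J) (L :\: J) +
  \sum_(J : {set 'I_m} | J \subset L) \sum_(i | i \notin L)
     (e J (L :\: J) * s i J) *: P i (i |: J) (L :\: J).
  rewrite -big_split; apply: eq_bigr => J hJ; rewrite (bigID (fun i => i \in L)) /=.
  congr (_ + _); apply: eq_bigl => i; apply/andP/idP => [[]//|hi]; split => //.
  by apply: contra hi; apply: (subsetP hJ).
have h2 : \sum_(J : {set 'I_m} | J \subset L)
  \sum_(i | i \notin L :\: J) (e J (L :\: J) * (-1) ^+ #|J| * s i (L :\: J)) *: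
     P i J (i |: (L :\: J)) =
  \sum_(J : {set 'I_m} | J \subset L) \sum_(i | (i \notin L :\: J) && (i \in L))
     (e J (L :\: J) * (-1) ^+ #|J| * s i (L :\: J)) *: P i J (i |: (L :\: J)) +
  \sum_(J : {set 'I_m} | J \subset L) \sum_(i | i \notin L)
     (e J (L :\: J) * (-1) ^+ #|J| * s i (L :\: J)) *: P i J (i |: (L :\: J)).
  rewrite -big_split; apply: eq_bigr => J hJ; rewrite (bigID (fun i => i \in L)) /=.
  congr (_ + _); apply: eq_bigl => i; apply/andP/idP => [[]//|hi]; split => //.
  by rewrite inE (negbTE hi) andbF.
rewrite h1 h2 addrACA cross add0r addrC.
by [].
Qed.

End Leib.

Lemma pair_antisym (V : zmodType) (Q : pred 'I_m) (f : 'I_m -> 'I_m -> V) :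
  (forall i j, Q i -> Q j -> (i < j)%N -> f j i = - f i j) ->
  \sum_(i | Q i) \sum_(j | Q j && (j != i)) f i j = 0.
Proof.
move=> hf.
have -> : \sum_(i | Q i) \sum_(j | Q j && (j != i)) f i j =
  \sum_(i | Q i) \sum_(j | Q j && (i < j)%N) f i j +
  \sum_(i | Q i) \sum_(j | Q j && (j < i)%N) f i j.
  rewrite -big_split; apply: eq_bigr => i _; rewrite (bigID (fun j : 'I_m => (i < j)%N)) /=.
  congr (_ + _); apply: eq_bigl => j; rewrite -val_eqE /=;
    case: (ltngtP i j) => h; rewrite ?andbT ?andbF //= ?(gtn_eqF h) ?(ltn_eqF h) ?h ?eqxx ?andbT ?andbF //.
rewrite [X in _ + X](exchange_big_dep Q) /=; last by move=> i j _ /andP[].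
rewrite -big_split big1 // => a ha.
have -> : \sum_(i | [&& Q i, Q a & (a < i)%N]) f i a = \sum_(i | Q i && (a < i)%N) f i a.
  by apply: eq_bigl => i; rewrite ha.
rewrite -big_split big1 // => b /andP[hb hab] /=; by rewrite (hf a b) // addrN.
Qed.

Lemma Kd2 x : Kd K (Kd K x) = 0.
Proof.
apply/ffunP => L; rewrite ffunE [RHS]ffunE.
under eq_bigr => i hi do rewrite ffunE mulr_sumr SRred_sum scaler_sumr.
under eq_bigr => i hi do under eq_bigr => j hj do
  rewrite -scalerAr SRredZ SRredMr scalerA.
rewrite (eq_bigr (fun i => \sum_(j | (j \notin L) && (j != i))
   ((-1) ^+ lts i L * (-1) ^+ lts j (i |: L)) *: SRred K ('X_i * ('X_j * x (j |: (i |: L)))))).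
  apply: pair_antisym => i j hi hj hij.
  have hji : j != i by rewrite neq_ltn hij orbT.
  rewrite mulrCA setUCA -scaleNr; congr (_ *: _).
  rewrite !lts_U1 // -!exprD -[RHS]mulN1r -exprS; apply: sgn_odd.
  by rewrite hij (ltnNge j i) (ltnW hij) /=; oddcase.
move=> i hi; apply: eq_bigl => j; rewrite !inE negb_or andbC.
by [].
Qed.

Lemma Kleibniz x y :
  Kd K (Kmul K x y) = Kmul K (Kd K x) y + Kmul K (Kpar x) (Kd K y).
Proof. by apply/ffunP => L; rewrite Kleibniz_pt !ffunE. Qed.


Lemma KdD x y : Kd K (x + y) = Kd K x + Kd K y.
Proof.
apply/ffunP => L; rewrite !ffunE -big_split; apply: eq_bigr => i _.
by rewrite ffunE mulrDr SRredD scalerDr.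
Qed.
Lemma KdN x : Kd K (- x) = - Kd K x.
Proof.
apply/ffunP => L; rewrite !ffunE -sumrN; apply: eq_bigr => i _.
by rewrite ffunE mulrN SRredN scalerN.
Qed.
Lemma KdB x y : Kd K (x - y) = Kd K x - Kd K y.
Proof. by rewrite KdD KdN. Qed.

Lemma KmulDl x y z : Kmul K (x + y) z = Kmul K x z + Kmul K y z.
Proof.
apply/ffunP => L; rewrite [RHS]ffunE !KmulE -big_split; apply: eq_bigr => J _.
by rewrite ffunE mulrDl SRredD scalerDr.
Qed.
Lemma KmulDr x y z : Kmul K x (y + z) = Kmul K x y + Kmul K x z.
Proof.
apply/ffunP => L; rewrite [RHS]ffunE !KmulE -big_split; apply: eq_bigr => J _.
by rewrite ffunE mulrDr SRredD scalerDr.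
Qed.
Lemma KmulNl x y : Kmul K (- x) y = - Kmul K x y.
Proof.
apply/ffunP => L; rewrite [RHS]ffunE !KmulE -sumrN; apply: eq_bigr => J _.
by rewrite ffunE mulNr SRredN scalerN.
Qed.
Lemma Kmul0l y : Kmul K 0 y = 0.
Proof.
apply/ffunP => L; rewrite [RHS]ffunE KmulE big1 // => J _.
by rewrite ffunE mul0r SRred0 scaler0.
Qed.
Lemma Kmul0r x : Kmul K x 0 = 0.
Proof.
apply/ffunP => L; rewrite [RHS]ffunE KmulE big1 // => J _.
by rewrite ffunE mulr0 SRred0 scaler0.
Qed.

Lemma KbarD x y : Kbar (x + y) = Kbar x + Kbar y.
Proof. by apply/ffunP => J; rewrite !ffunE scalerDr. Qed.
Lemma KbarE x : Kbar x = Kpar (- x).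
Proof. by apply/ffunP => J; rewrite !ffunE exprS mulN1r scaleNr scalerN. Qed.
Lemma KbarKd y : Kbar (Kd K y) = - Kd K (Kbar y).
Proof.
apply/ffunP => J; rewrite !ffunE scaler_sumr -sumrN; apply: eq_bigr => i hi.
rewrite ffunE -scalerAr SRredZ !scalerA -scaleNr; congr (_ *: _).
rewrite cardsU1 hi /= -!exprD -[RHS]mulN1r -exprS; apply: sgn_odd.
rewrite /= !oddD /=; oddcase.
Qed.

Lemma massey_bd c0 c1 y0 y1 z a00 a11 :
  Kd K c0 = 0 -> Kd K c1 = 0 -> a00 - c0 = Kd K y0 -> a11 - c1 = Kd K y1 ->
  Kmul K (Kbar a00) a11 = Kd K z -> exists w, Kmul K (Kbar c0) c1 = Kd K w.
Proof.
move=> hc0 hc1 h0 h1 hz.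
have ha0 : a00 = c0 + Kd K y0 by rewrite -h0 addrC subrK.
have ha1 : a11 = c1 + Kd K y1 by rewrite -h1 addrC subrK.
have da : Kd K a00 = 0 by rewrite ha0 KdD Kd2 hc0 addr0.
have E1 : Kmul K (Kbar a00) (Kd K y1) = Kd K (Kmul K (- a00) y1).
  by rewrite Kleibniz KdN da oppr0 Kmul0l add0r KbarE.
have E2 : Kmul K (Kbar (Kd K y0)) c1 = Kd K (Kmul K (- Kbar y0) c1).
  by rewrite Kleibniz hc1 Kmul0r addr0 KdN KbarKd.
exists (z - Kmul K (- a00) y1 - Kmul K (- Kbar y0) c1).
rewrite !KdB -hz -E1 -E2 ha1 KmulDr addrK ha0 KbarD KmulDl addrK.
by [].
Qed.

Lemma has_minnf (S : {set 'I_m}) : set0 \in K -> S \notin K ->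
  exists2 M, min_nonface K M & M \subset S.
Proof.
move=> h0 hS.
have hP : (S \subset S) && (S \notin K) by rewrite subxx hS.
case: (@arg_minnP _ S (fun M : {set 'I_m} => (M \subset S) && (M \notin K)) (fun M : {set 'I_m} => #|M|) hP) => M /andP[hMS hMK] hmin.
exists M => //; split => //.
  by apply: contraNneq hMK => ->.
move=> x hx; apply/negPn/negP => hK.
have := hmin (M :\ x); rewrite hK andbT.
have -> : M :\ x \subset S by apply: subset_trans hMS; apply: subsetDl.
by rewrite (cardsD1 x M) hx ltnn => /(_ isT).
Qed.

Definition ind (S : {set 'I_m}) : 'X_{1..m} := [multinom ((i \in S) : nat) | i < m].
Lemma indE (S : {set 'I_m}) i : ind S i = (i \in S). Proof. by rewrite mnmE. Qed.
Lemma msupport_ind (S : {set 'I_m}) : msupport (ind S) = S.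
Proof. by apply/setP => i; rewrite inE indE; case: (i \in S). Qed.
Lemma ind_D1 (S : {set 'I_m}) l : l \in S -> ind S = (U_(l) + ind (S :\ l))%MM.
Proof.
move=> hl; apply/mnmP => x; rewrite mnmDE mnm1E !indE !inE.
case: (l =P x) => [<-|/eqP hx]; first by rewrite hl eqxx.
by rewrite eq_sym hx.
Qed.
Lemma ind_U (S T : {set 'I_m}) : S :&: T = set0 -> ind (S :|: T) = (ind S + ind T)%MM.
Proof.
move=> /setP h; apply/mnmP => x; rewrite mnmDE !indE inE.
have := h x; rewrite !inE; by case: (x \in S); case: (x \in T).
Qed.

Lemma coefXl (P : {mpoly k[m]}) (l : 'I_m) (S : {set 'I_m}) :
  ('X_l * P)@_(ind S) = if l \in S then P@_(ind (S :\ l)) else 0.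
Proof.
rewrite mulrC; case: ifP => hl.
  by rewrite (ind_D1 hl) mcoeffMX.
apply/eqP; rewrite mcoeff_eq0 (perm_mem (msuppMX P U_(l))).
apply/negP => /mapP [m' _ /mnmP /(_ l)].
by rewrite mnmDE mnm1E eqxx indE hl.
Qed.

Lemma SRredX0 a : msupport a \notin K -> SRred K ('X_[a] : {mpoly k[m]}) = 0.
Proof.
move=> ha; apply/mpolyP => b; rewrite SRredE mcoeffX mcoeff0.
by case: ifP => // hb; case: (a =P b) => // ab; rewrite ab hb in ha.
Qed.

Section Phi.
Variables (N1 N2 : {set 'I_m}).
Hypotheses (hN1 : min_nonface K N1) (hN2 : min_nonface K N2)
  (hdis : N1 :&: N2 = set0) (hT : minimal_taylor K).
Let W := N1 :|: N2.

Lemma K0 : set0 \in K.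
Proof.
case: hN1 => /set0Pn [i hi] _ /(_ i hi) h; apply: (Ks h); exact: sub0set.
Qed.

Lemma dis_N (p q : 'I_m) : p \in N1 -> q \in N2 -> p != q.
Proof.
move=> hp hq; apply/eqP => pq; move/setP: hdis => /(_ p).
by rewrite !inE hp pq hq.
Qed.

Lemma face_W (p q : 'I_m) : p \in N1 -> q \in N2 -> W :\: [set p; q] \in K.
Proof.
move=> hp hq; apply/negPn/negP => hS.
case: (has_minnf K0 hS) => M hM hMS.
have hpM : p \notin M by apply/negP => /(subsetP hMS); rewrite !inE eqxx.
have hqM : q \notin M by apply/negP => /(subsetP hMS); rewrite !inE eqxx orbT.
have n1M : N1 != M by apply: contraNneq hpM => <-.
have n2M : N2 != M by apply: contraNneq hqM => <-.
have hI : forall N, N \in [set N1; N2; M] -> min_nonface K N.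
  by move=> X; rewrite !inE => /orP[/orP[]|] /eqP ->.
have hMI : M \in [set N1; N2; M] by rewrite !inE eqxx orbT.
have := hT hI hMI; move/negP; apply.
apply/eqP/setP => x; rewrite !inE; apply/negP => /andP[hx1 /bigcupP [X hX hxX]].
have hxW : x \in W.
  move: hX; rewrite !inE => /orP[/orP[]|] /eqP hX; subst X.
  - by rewrite hxX.
  - by rewrite hxX orbT.
  - by move: (subsetP hMS x hxX); rewrite !inE => /andP[_ ->].
move/negP: hx1; apply; move: hxW; rewrite /W inE => /orP[] hxN.
  by apply/bigcupP; exists N1 => //; rewrite !inE eqxx /= n1M.
by apply/bigcupP; exists N2 => //; rewrite !inE eqxx orbT n2M.
Qed.

Lemma lts2 (l p q : 'I_m) : p != q -> lts l [set p; q] = ((p < l)%N + (q < l)%N)%N.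
Proof. by move=> hpq; rewrite lts_U1 ?lts1 // inE. Qed.

Definition phi (x : KA m k) : k := \sum_(p in N1) \sum_(q in N2)
  (-1) ^+ (q < p)%N * (x [set p; q])@_(ind (W :\: [set p; q])).

Lemma phi_Kd z : phi (Kd K z) = 0.
Proof.
rewrite /phi.
pose Z (T : {set 'I_m}) := (z T)@_(ind (W :\: T)).
have E : forall p q : 'I_m, p \in N1 -> q \in N2 ->
   (Kd K z [set p; q])@_(ind (W :\: [set p; q])) =
   \sum_(l | (l \in N1) && (l != p)) (-1) ^+ lts l [set p; q] * Z (l |: [set p; q]) +
   \sum_(l | (l \in N2) && (l != q)) (-1) ^+ lts l [set p; q] * Z (l |: [set p; q]).
  move=> p q hp hq; rewrite KdE raddf_sum /=.
  have -> : \sum_(l | l \notin [set p; q])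
     ((-1) ^+ lts l [set p; q] *: SRred K ('X_l * z (l |: [set p; q])))@_(ind (W :\: [set p; q])) =
     \sum_(l | l \in W :\: [set p; q]) (-1) ^+ lts l [set p; q] * Z (l |: [set p; q]).
    rewrite [RHS]big_mkcond [LHS]big_mkcond /=; apply: eq_bigr => l _.
    rewrite mcoeffZ SRredE msupport_ind (face_W hp hq) coefXl.
    case: (boolP (l \in W :\: [set p; q])) => hl.
      have -> : l \notin [set p; q] by move: hl; rewrite inE => /andP[].
      by rewrite /Z setDDl [[set p; q] :|: _]setUC.
    by case: ifP; rewrite ?mulr0.
  rewrite (bigID (fun l => l \in N1)) /=; congr (_ + _); apply: eq_bigl => l.
    case: (boolP (l \in N1)) => hl1; rewrite ?andbF ?andbT //.
    rewrite !inE hl1 /=; case: (l =P p) => //= _.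
    by case: (l =P q) => // lq; move: (dis_N hl1 hq); rewrite lq eqxx.
  case: (boolP (l \in N1)) => hl1 /=; rewrite ?andbF ?andbT.
    case: (boolP (l \in N2)) => hl2 //=; by move: (dis_N hl1 hl2); rewrite eqxx.
  rewrite !inE (negbTE hl1) /=; case: (l =P q) => _; rewrite ?orbT ?orbF ?andbF ?andbT //.
  by case: (l =P p) => // lp; rewrite lp hp in hl1.
under eq_bigr => p hp do under eq_bigr => q hq do rewrite (E p q hp hq) mulrDr.
under eq_bigr => p hp do rewrite big_split /=.
rewrite big_split /= [X in X + _](_ : _ = 0) ?add0r.
  apply: big1 => p hp; under eq_bigr => q hq do rewrite mulr_sumr.
  apply: (@pair_antisym k (fun t : 'I_m => t \in N2)
    (fun q l : 'I_m => (-1) ^+ (q < p)%N * ((-1) ^+ lts l [set p; q] * Z (l |: [set p; q])))) => q l hq hl hql.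
  have hpq := dis_N hp hq; have hpl := dis_N hp hl.
  rewrite !mulrA -mulNr; congr (_ * _).
    rewrite !lts2 // -!exprD -[RHS]mulN1r -exprS; apply: sgn_odd.
    move: hpq hpl; rewrite -!val_eqE /= => hpq hpl.
    rewrite hql (leq_gtF (ltnW hql)).
    case: (ltngtP p q) hpq => // h1 _; case: (ltngtP p l) hpl => // h2 _; oddcase.
  suff -> : q |: [set p; l] = l |: [set p; q] by [].
  by apply/setP => y; rewrite !inE; case: (y == p); case: (y == q); case: (y == l); rewrite ?orbT.
rewrite exchange_big /=; apply: big1 => q hq; under eq_bigr => p hp do rewrite mulr_sumr.
apply: (@pair_antisym k (fun t : 'I_m => t \in N1)
    (fun p l : 'I_m => (-1) ^+ (q < p)%N * ((-1) ^+ lts l [set p; q] * Z (l |: [set p; q])))) => p l hp hl hpl.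
have hpq := dis_N hp hq; have hlq := dis_N hl hq.
rewrite !mulrA -mulNr; congr (_ * _).
  rewrite !lts2 // -!exprD -[RHS]mulN1r -exprS; apply: sgn_odd.
  rewrite hpl (leq_gtF (ltnW hpl)); oddcase.
suff -> : p |: [set l; q] = l |: [set p; q] by [].
by apply/setP => y; rewrite !inE; case: (y == p); case: (y == q); case: (y == l); rewrite ?orbT.
Qed.

Definition gen (N : {set 'I_m}) (i : 'I_m) : KA m k :=
  [ffun J : {set 'I_m} => if J == [set i] then 'X_[ind (N :\ i)] else 0].

Lemma gen_cycle N i : min_nonface K N -> i \in N -> Kd K (gen N i) = 0.
Proof.
move=> [_ hNK _] hi; apply/ffunP => L; rewrite ffunE [RHS]ffunE big1 // => l hl.
rewrite ffunE; case: eqP => [h|_]; last by rewrite mulr0 SRred0 scaler0.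
have : l \in [set i] by rewrite -h setU11.
rewrite inE => /eqP ->.
by rewrite -mpolyXD -ind_D1 // SRredX0 ?scaler0 // msupport_ind.
Qed.

Lemma gen_pos N i : min_nonface K N -> i \in N -> pos_cycle K (gen N i).
Proof.
move=> hN hi; split; first split.
- move=> J a; rewrite ffunE; case: ifP => _; last by rewrite mcoeff_msupp mcoeff0 eqxx.
  rewrite msuppX inE => /eqP ->; rewrite msupport_ind; case: hN => _ _; exact.
- exact: gen_cycle.
exists (2 * mdeg (ind (N :\ i)) + 1)%N; split; first by rewrite addn1.
move=> J a; rewrite ffunE; case: eqP => [->|_]; last by rewrite mcoeff_msupp mcoeff0 eqxx.
by rewrite msuppX inE => /eqP ->; rewrite cards1.
Qed.

Lemma SRredX1 a : msupport a \in K -> SRred K ('X_[a] : {mpoly k[m]}) = 'X_[a].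
Proof.
move=> ha; apply/mpolyP => b; rewrite SRredE mcoeffX.
by case: ifP => // hb; case: (a =P b) => // ab; rewrite ab hb in ha.
Qed.

Lemma set1_eqb (a b : 'I_m) : ([set a] == [set b]) = (a == b).
Proof.
apply/eqP/eqP => [h|->//]; have : a \in [set b] by rewrite -h set11.
by rewrite inE => /eqP.
Qed.

Lemma phi_prod i j : i \in N1 -> j \in N2 ->
  phi (Kmul K (Kbar (gen N1 i)) (gen N2 j)) = 1.
Proof.
move=> hi hj; rewrite /phi.
have hij := dis_N hi hj.
have hmon : (ind (N1 :\ i) + ind (N2 :\ j))%MM = ind (W :\: [set i; j]).
  rewrite -ind_U; last first.
    apply/setP => x; move/setP: hdis => /(_ x); rewrite !inE.
    by case: (x \in N1); case: (x \in N2); rewrite ?andbF.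
  congr ind; apply/setP => x; rewrite /W !inE.
  case: (boolP (x \in N1)) => h1; case: (boolP (x \in N2)) => h2 //=.
  - by move: (dis_N h1 h2); rewrite eqxx.
  - by rewrite negb_or (dis_N h1 hj); case: (x == i).
  - by have := dis_N hi h2; rewrite eq_sym => hxi; rewrite negb_or hxi; case: (x == j).
  - by rewrite !andbF.
have E : forall p q : 'I_m, p \in N1 -> q \in N2 ->
  ((Kmul K (Kbar (gen N1 i)) (gen N2 j)) [set p; q])@_(ind (W :\: [set p; q])) =
  if (p == i) && (q == j) then (-1) ^+ inv [set i] [set j] else 0.
  move=> p q hp hq; rewrite KmulE.
  have hqi : q != i by rewrite eq_sym; apply: dis_N.
  case: (p =P i) => [pi|/eqP/negbTE npi]; rewrite ?npi /=; last first.
    rewrite big1 ?mcoeff0 // => J hJ; rewrite !ffunE; case: (J =P [set i]) => [eJ|_]; last first.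
      by rewrite scaler0 mul0r SRred0 scaler0.
    have : i \in [set p; q] by apply: (subsetP hJ); rewrite eJ set11.
    rewrite !inE => /orP[/eqP ip|/eqP iq]; first by rewrite ip eqxx in npi.
    by rewrite iq eqxx in hqi.
  subst p; rewrite (bigD1 [set i]) /=; last by rewrite sub1set !inE eqxx.
  rewrite big1 ?addr0; last first.
    by move=> J /andP[_ /negbTE hJ]; rewrite !ffunE hJ scaler0 mul0r SRred0 scaler0.
  have -> : [set i; q] :\: [set i] = [set q].
    apply/setP => x; rewrite !inE; case: (x =P q) => [->|_].
      by rewrite hqi orbT.
    by case: (x == i); rewrite ?andbF.
  rewrite !ffunE eqxx set1_eqb; case: (q =P j) => [->|_]; last first.
    by rewrite mulr0 SRred0 scaler0 mcoeff0.
  rewrite cards1 expr2 mulN1r opprK scale1r -mpolyXD hmon SRredX1; last first.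
    by rewrite msupport_ind face_W.
  by rewrite mcoeffZ mcoeffX eqxx mulr1.
under eq_bigr => p hp do under eq_bigr => q hq do rewrite (E p q hp hq).
rewrite (bigD1 i) //= [X in _ + X]big1 ?addr0; last first.
  by move=> p /andP[_ /negbTE ->]; rewrite big1 // => q _; rewrite mulr0.
rewrite (bigD1 j) //= [X in _ + X]big1 ?addr0; last first.
  by move=> q /andP[_ /negbTE ->]; rewrite andbF mulr0.
rewrite !eqxx /= -exprD invE big_set1 lts1; apply/eqP.
by rewrite -signr_odd oddD addbb.
Qed.

Lemma Kd0 : Kd K (0 : KA m k) = 0.
Proof.
by apply/ffunP => L; rewrite !ffunE big1 // => l _; rewrite ffunE mulr0 SRred0 scaler0.
Qed.

Lemma not_golod : golod k K -> False.
Proof.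
move=> hG.
case: (hN1) => /set0Pn [i hi] _ _; case: (hN2) => /set0Pn [j hj] _ _.
pose c := fun t : nat => if t == 0%N then gen N1 i else gen N2 j.
have hpos : forall t, (t < 2)%N -> pos_cycle K (c t).
  by case=> [|[|]] // _; rewrite /c /=; apply: gen_pos.
have hex : exists a, defining_system K 2 c a.
  exists (fun t _ => c t) => t u /andP[htu hu2] hn; split.
  - by case: (hpos t (leq_ltn_trans htu hu2)) => [[]].
  - move=> _; exists 0; split; last by rewrite subrr Kd0.
    by move=> J a; rewrite ffunE mcoeff_msupp mcoeff0 eqxx.
  - move=> htu'; exfalso; apply: hn.
    have : (t == 0)%N && (u == 1)%N by case: u hu2 htu htu' => [|[|u]] //; case: t.
    by case/andP => /eqP -> /eqP ->.
case: (hG 2 c isT hpos hex) => a [hds [w [_ hw]]].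
have [_ h00 _] := hds 0%N 0%N isT (fun h => match h with conj _ h' => ltac:(discriminate h') end).
have [_ h11 _] := hds 1%N 1%N isT (fun h => match h with conj h' _ => ltac:(discriminate h') end).
case: (h00 erefl) => y0 [_ e0]; case: (h11 erefl) => y1 [_ e1].
rewrite /massey_value /= big_nat1 in hw.
have [w' hw'] := massey_bd (gen_cycle hN1 hi) (gen_cycle hN2 hj) e0 e1 hw.
have := congr1 phi hw'; rewrite phi_Kd phi_prod // => /eqP; rewrite oner_eq0.
by [].
Qed.

End Phi.

End S.


Theorem proposition2p6 (m : nat) (K : {set {set 'I_m}}) (k : comNzRingType) :
  simplicial_complex K -> minimal_taylor K -> golod k K ->
  forall N1 N2 : {set 'I_m}, min_nonface K N1 -> min_nonface K N2 ->
  N1 != N2 -> N1 :&: N2 != set0.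
Proof.
move=> Ks hT hG N1 N2 h1 h2 _; apply/negP => /eqP hdis.
exact: (not_golod Ks h1 h2 hdis hT hG).
Qed.
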